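(* Let $H(u,v,z,t)=\sum_w u^{\mathrm{asc}(w)}v^{\mathrm{last}(w)}z^{\mathrm{zeros}(w)}t^{\mathrm{length}(w)}$, summed over all nonempty ascent sequences $w$. Then $$(v-1-tv(1-u))\,H(u,v,z,t)=tz(v-1)+t(z(v-1)-v)\,H(u,1,z,t)+tuv^2\,H(uv,1,z,t).$$
   Context: An ascent sequence of length $n$ is a sequence $(x_1,\dots,x_n)$ of nonnegative integers with $x_1=0$ and $x_i\in[0,1+\mathrm{asc}(x_1,\dots,x_{i-1})]$ for $2\le i\le n$, where $\mathrm{asc}(y_1,\dots,y_k)=|\{1\le j<k: y_j<y_{j+1}\}|$. For an ascent sequence $w$: $\mathrm{length}(w)$ is its number of entries, $\mathrm{asc}(w)$ its number of ascents, $\mathrm{last}(w)$ its rightmost entry, $\mathrm{zeros}(w)$ its number of entries equal to 0. $H$ is a formal power series in $t$ with polynomial coefficients in $u,v,z$; $H(u,1,z,t)$ and $H(uv,1,z,t)$ denote the substitutions $v\mapsto1$ and $(u,v)\mapsto(uv,1)$. *)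

(* Defs.v *)
From HB Require Import structures.
From mathcomp Require Import all_boot all_order all_algebra.
Set Implicit Arguments. Unset Strict Implicit. Unset Printing Implicit Defensive.
Import GRing.Theory.
Local Open Scope ring_scope.

Definition asc (s : seq nat) : nat :=
  match s with
  | [::] => 0%N
  | x :: s' => count id (pairmap (fun a b => (a < b)%N) x s')
  end.

(* (x_1,...,x_n) is an ascent sequence: nonempty, x_1 = 0 and
   x_i <= 1 + asc(x_1,...,x_{i-1}) for 2 <= i <= n (0-based: index i >= 1,
   prefix take i s). *)
Definition ascent_seq (s : seq nat) : bool :=
  match s with
  | [::] => false
  | x :: _ => (x == 0)%N &&
      all (fun i => (nth 0%N s i <= (asc (take i s)).+1)%N) (iota 1 (size s).-1)
  end.

Definition last_entry (s : seq nat) : nat := last 0%N s.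
Definition zeros (s : seq nat) : nat := count (pred1 0%N) s.

Definition fps (R : comNzRingType) := nat -> R.

Definition fps_add (R : comNzRingType) (f g : fps R) : fps R := fun n => f n + g n.
Definition fps_opp (R : comNzRingType) (f : fps R) : fps R := fun n => - f n.
Definition fps_mul (R : comNzRingType) (f g : fps R) : fps R :=
  fun n => \sum_(i < n.+1) f i * g (n - i)%N.
Definition fps_const (R : comNzRingType) (c : R) : fps R :=
  fun n => if n == 0%N then c else 0.
Definition fps_t (R : comNzRingType) : fps R := fun n => if n == 1%N then 1 else 0.

Declare Scope fps_scope.
Delimit Scope fps_scope with fps.
Notation "f + g" := (fps_add f g) : fps_scope.
Notation "f - g" := (fps_add f (fps_opp g)) : fps_scope.
Notation "f * g" := (fps_mul f g) : fps_scope.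
Notation "c %:S" := (fps_const c) (at level 2, format "c %:S") : fps_scope.
Notation "'t" := (fps_t _) : fps_scope.

(* Coefficient of t^n: sum over ascent sequences of length n; every entry
   x_i of an ascent sequence of length n satisfies x_i <= i-1 < n, so they
   are enumerated among the n-tuples with entries in 'I_n. *)
Definition Hser (R : comNzRingType) (u v z : R) : fps R :=
  fun n => \sum_(w : n.-tuple 'I_n | ascent_seq [seq val x | x <- w])
      (let s := [seq val x | x <- w] in
       u ^+ asc s * v ^+ last_entry s * z ^+ zeros s).

(* Main.v *)
Require Import Defs.
From HB Require Import structures.
From mathcomp Require Import all_boot all_order all_algebra ring.
From Stdlib Require Import FunctionalExtensionality.
Import GRing.Theory.
Local Open Scope ring_scope.

Lemma pairmap_rcons' (T1 T2 : Type) (f : T1 -> T1 -> T2) y s x :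
  pairmap f y (rcons s x) = rcons (pairmap f y s) (f (last y s) x).
Proof. by elim: s y => [|a s IH] y //=; rewrite IH. Qed.

Lemma count_rcons' (T : Type) (a : pred T) s x :
  count a (rcons s x) = (count a s + a x)%N.
Proof. by rewrite -cats1 count_cat /= addn0. Qed.

Lemma asc_rcons w x : w != [::] ->
  asc (rcons w x) = (asc w + (last 0 w < x))%N.
Proof.
case: w => [|y w] //= _.
by rewrite pairmap_rcons' count_rcons'.
Qed.

Lemma asc_lt w : w != [::] -> (asc w < size w)%N.
Proof.
case: w => [|y w] //= _.
by rewrite ltnS (leq_trans (count_size _ _)) // size_pairmap.
Qed.

Lemma ascent_seqE s : s != [::] ->
  ascent_seq s = (head 0%N s == 0%N) &&
    all (fun i => (nth 0%N s i <= (asc (take i s)).+1)%N) (iota 1 (size s).-1).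
Proof. by case: s. Qed.

Lemma ascent_rcons w x : w != [::] ->
  ascent_seq (rcons w x) = ascent_seq w && (x <= (asc w).+1)%N.
Proof.
move=> nw.
rewrite ascent_seqE; last by case: (w).
rewrite ascent_seqE //.
have -> : head 0%N (rcons w x) = head 0%N w by case: (w) nw.
rewrite size_rcons /=.
have Hs : size w = (1 + (size w).-1)%N by case: (w) nw.
have -> : iota 1 (size w) = rcons (iota 1 (size w).-1) (size w).
  have Hs' : size w = ((size w).-1 + 1)%N by rewrite addn1; case: (w) nw.
  by rewrite {1}Hs' iotaD -Hs cats1.
rewrite all_rcons.
rewrite nth_rcons ltnn eqxx -cats1 take_size_cat // cats1.
rewrite -andbA; congr (_ && _); rewrite andbC; congr (_ && _).
apply: eq_in_all => i; rewrite mem_iota => /andP [_ Hi].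
rewrite -Hs in Hi.
rewrite nth_rcons Hi -cats1 takel_cat //; exact: ltnW.
Qed.

Definition ext (L : seq (seq nat)) : seq (seq nat) :=
  [seq rcons w x | w <- L, x <- iota 0 (asc w).+2].

Fixpoint AS (n : nat) : seq (seq nat) :=
  match n with
  | 0 => [::]
  | m.+1 => match m with 0 => [:: [:: 0%N]] | _.+1 => ext (AS m) end
  end.

Lemma AS_SS k : AS k.+2 = ext (AS k.+1).
Proof. by []. Qed.

Lemma mem_AS n s : (s \in AS n) = ascent_seq s && (size s == n).
Proof.
elim: n s => [|m IH] s.
  by case: s => [|x s] //=; rewrite andbF.
case: m IH => [|k] IH.
  rewrite /= inE.
  case: s => [|x [|y t]] //=; by rewrite ?andbT ?eqseq_cons ?andbT ?andbF.
rewrite AS_SS.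
apply/allpairsPdep/idP.
  case=> w [x [Hw Hx ->]].
  move: Hw; rewrite IH => /andP [Aw /eqP Sw].
  have nw : w != [::] by apply/eqP => E; rewrite E in Sw.
  rewrite ascent_rcons // Aw /= size_rcons Sw eqxx andbT.
  by move: Hx; rewrite mem_iota leq0n add0n ltnS /=.
case/lastP: s => [|w x]; first by rewrite andbF.
rewrite size_rcons eqSS => /andP [A /eqP Sw].
have nw : w != [::] by apply/eqP => E; rewrite E in Sw.
move: A; rewrite ascent_rcons // => /andP [Aw Hx].
exists w, x; split => //.
  by rewrite IH Aw Sw eqxx.
by rewrite mem_iota leq0n add0n ltnS /=.
Qed.

Lemma uniq_AS n : uniq (AS n).
Proof.
elim: n => [|m IH] //.
case: m IH => [|k] IH //.
rewrite AS_SS.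
apply: allpairs_uniq_dep => //.
  by move=> w _; apply: iota_uniq.
move=> [w1 x1] [w2 x2] _ _ /= /rcons_inj [-> ->] //.
Qed.

Lemma AS_lt n s : s \in AS n -> all (fun x => x < n)%N s.
Proof.
elim: n s => [|m IH] s //.
case: m IH => [|k] IH.
  by rewrite /= inE => /eqP ->.
rewrite AS_SS => /allpairsPdep [w [x [Hw Hx ->]]].
rewrite all_rcons.
have := Hw; rewrite mem_AS => /andP [_ /eqP Sw].
have nw : w != [::] by apply/eqP => E; rewrite E in Sw.
apply/andP; split.
  move: Hx; rewrite mem_iota leq0n add0n ltnS /= => Hx.
  have := asc_lt _ nw; rewrite Sw => Ha.
  by rewrite ltnS (leq_trans Hx).
apply: sub_all (IH _ Hw) => y /= Hy; exact: ltnW.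
Qed.

Lemma AS_last n w : w \in AS n -> (last 0%N w <= (asc w).+1)%N.
Proof.
elim: n w => [|m IH] w //.
case: m IH => [|k] IH.
  by rewrite /= inE => /eqP ->.
rewrite AS_SS => /allpairsPdep [w' [x [Hw Hx ->]]].
have := Hw; rewrite mem_AS => /andP [_ /eqP Sw].
have nw : w' != [::] by apply/eqP => E; rewrite E in Sw.
rewrite last_rcons asc_rcons //.
move: Hx; rewrite mem_iota leq0n add0n ltnS /= => Hx.
by rewrite (leq_trans Hx) // ltnS leq_addr.
Qed.


Section Alg.
Variable R : comNzRingType.

Definition wt (a b c : R) (s : seq nat) : R :=
  a ^+ asc s * b ^+ last_entry s * c ^+ zeros s.

Definition G (a b c : R) (n : nat) : R := \sum_(s <- AS n) wt a b c s.

Lemma Hser_G a b c n : Hser a b c n = G a b c n.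
Proof.
rewrite /Hser /G.
have -> : (\sum_(w : n.-tuple 'I_n | ascent_seq [seq val x | x <- w])
      (let s := [seq val x | x <- w] in
       a ^+ asc s * b ^+ last_entry s * c ^+ zeros s)) =
   \sum_(s <- map (fun w : n.-tuple 'I_n => [seq val x | x <- w]) (index_enum (n.-tuple 'I_n))
         | ascent_seq s) wt a b c s.
  by rewrite big_map.
rewrite -big_filter; apply: perm_big; apply: uniq_perm.
- rewrite filter_uniq // map_inj_uniq ?index_enum_uniq //.
  by move=> w1 w2 /(inj_map val_inj) /val_inj.
- exact: uniq_AS.
move=> s; rewrite mem_filter mem_AS.
case As: (ascent_seq s) => //=.
apply/mapP/idP.
  by case=> w _ ->; rewrite size_map size_tuple.
move=> Sn.
have Hall : all (fun x => x < n)%N s by apply: (@AS_lt n); rewrite mem_AS As.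
have Ht : size (pmap insub s : seq 'I_n) == n.
  rewrite size_pmap (eq_count (@isSome_insub _ _ _)).
  by move: Hall; rewrite all_count => /eqP ->.
exists (Tuple Ht); first exact: mem_index_enum.
rewrite /= (pmap_filter (@insubK _ _ _)).
by rewrite (eq_filter (@isSome_insub _ _ _)); apply/esym/all_filterP.
Qed.


Definition f (a b c : R) (l x : nat) : R := a ^+ (l < x)%N * b ^+ x * c ^+ (x == 0%N).

Lemma Ssum0 a b c l k : (k <= l)%N ->
  (b - 1) * \sum_(0 <= x < k.+1) f a b c l x = c * (b - 1) - b + b ^+ k.+1.
Proof.
elim: k => [|k IH] Hk.
  rewrite big_nat1 /f ltn0 /= expr0 expr1. ring.
rewrite big_nat_recr //= mulrDr IH ?(ltnW Hk) //.
rewrite /f ltnNge Hk /= expr0 mul1r mulr1.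
rewrite (exprS b k.+1). set B := b ^+ k.+1. ring.
Qed.

Lemma Ssum a b c l d :
  (b - 1) * \sum_(0 <= x < (l.+1 + d)%N) f a b c l x =
  c * (b - 1) - b + b * (1 - a) * b ^+ l + a * b ^+ (l.+1 + d)%N.
Proof.
elim: d => [|d IH].
  rewrite addn0 Ssum0 // exprS. set B := b ^+ l. ring.
rewrite addnS big_nat_recr //= mulrDr IH.
rewrite /f ltnS leq_addr /= expr1 mulr1 exprS.
set B := b ^+ (l.+1 + d)%N. set B' := b ^+ l. ring.
Qed.

Lemma wt_rcons a b c w x : w != [::] ->
  wt a b c (rcons w x) = (a ^+ asc w * c ^+ zeros w) * f a b c (last 0%N w) x.
Proof.
move=> nw; rewrite /wt /f asc_rcons // /last_entry last_rcons /zeros count_rcons'.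
rewrite !exprD. set A := a ^+ asc w. set C := c ^+ count (pred1 0%N) w.
set A' := a ^+ _. set B := b ^+ x. set C' := c ^+ _. ring.
Qed.

Lemma G_rec a b c n :
  (b - 1) * G a b c n.+2 =
  (c * (b - 1) - b) * G a 1 c n.+1 + b * (1 - a) * G a b c n.+1
  + a * b ^+ 2 * G (a * b) 1 c n.+1.
Proof.
rewrite /G AS_SS /ext big_allpairs_dep !mulr_sumr -!big_split.
apply: eq_big_seq => w Hw.
have := Hw; rewrite mem_AS => /andP [_ /eqP Sw].
have nw : w != [::] by apply/eqP => E; rewrite E in Sw.
have Hl := AS_last _ _ Hw.
under eq_bigr => x _ do rewrite wt_rcons //.
rewrite -mulr_sumr.
have -> : \sum_(i <- iota 0 (asc w).+2) f a b c (last 0%N w) i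
   = \sum_(0 <= i < addn (last 0%N w).+1 ((asc w).+1 - last 0%N w)) f a b c (last 0%N w) i.
  by rewrite addSn subnKC.
rewrite mulrCA Ssum addSn subnKC //.
rewrite /wt /last_entry expr1n exprMn !exprS.
set A := a ^+ asc w. set C := c ^+ zeros w. set L := b ^+ last 0%N w.
set Ba := b ^+ asc w. rewrite /= expr0 mulr1. ring.
Qed.

Lemma G0 a b c : G a b c 0 = 0.
Proof. by rewrite /G big_nil. Qed.

Lemma G1 a b c : G a b c 1 = c.
Proof. by rewrite /G /= big_seq1 /wt /= !expr0 expr1 !mul1r. Qed.

End Alg.


Section FPS.
Variable R : comNzRingType.

Lemma mulC (c : R) (h : fps R) n : fps_mul (fps_const c) h n = c * h n.
Proof.
rewrite /fps_mul big_ord_recl /= subn0 big1 ?addr0 // => i _.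
by rewrite /fps_const /= mul0r.
Qed.

Lemma tC (c : R) n : fps_mul (fps_t R) (fps_const c) n = if n == 1%N then c else 0.
Proof.
rewrite /fps_mul; case: n => [|n].
  by rewrite big_ord1 /fps_t /= mul0r.
rewrite big_ord_recl /fps_t /= mul0r add0r.
case: n => [|n].
  by rewrite big_ord1 /= /fps_const /= mul1r.
rewrite big_ord_recl /= mul1r /fps_const /= big1 ?addr0 // => i _.
by rewrite /bump /= mul0r.
Qed.

Lemma tCmul (c : R) (h : fps R) n :
  fps_mul (fps_mul (fps_t R) (fps_const c)) h n = if n is m.+1 then c * h m else 0.
Proof.
have Hg := tC c; move: (fps_mul (fps_t R) (fps_const c)) Hg => g Hg.
rewrite /fps_mul.
case: n => [|n].
  by rewrite big_ord1 Hg /= mul0r.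
rewrite big_ord_recl Hg /= mul0r add0r.
rewrite big_ord_recl Hg /= subSS subn0 big1 ?addr0 // => i _.
by rewrite Hg /bump /= mul0r.
Qed.

Lemma addmul (f g h : fps R) n :
  fps_mul (fps_add f g) h n = fps_mul f h n + fps_mul g h n.
Proof. by rewrite /fps_mul -big_split; apply: eq_bigr => i _; rewrite /fps_add mulrDl. Qed.

Lemma oppmul (f h : fps R) n : fps_mul (fps_opp f) h n = - fps_mul f h n.
Proof. by rewrite /fps_mul -sumrN; apply: eq_bigr => i _; rewrite /fps_opp mulNr. Qed.

End FPS.

Theorem lemma5 (R : comNzRingType) (u v z : R) :
  (((v - 1)%:S - 't * (v * (1 - u))%:S) * Hser u v z)%fps =
  ('t * (z * (v - 1))%:S
   + 't * (z * (v - 1) - v)%:S * Hser u 1 z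
   + 't * (u * v ^+ 2)%:S * Hser (u * v) 1 z)%fps.
Proof.
apply: functional_extensionality => n.
rewrite addmul oppmul mulC tCmul /fps_add tC !tCmul.
case: n => [|[|k]] /=.
- rewrite !Hser_G G0 mulr0 subr0 !addr0. by [].
- rewrite !Hser_G !G0 G1 !mulr0 !addr0 subr0. ring.
- rewrite !Hser_G G_rec add0r. set X := G _ _ _ _. set Y := G _ _ _ _. set Z := G _ _ _ _. ring.
Qed.
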